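(* Let $C\subset\mathbb{C}$. Then $C$ is disconnected if and only if there is a closed connected set $A\subset\mathbb{C}$ that disconnects $C$.
   Context: A set $A\subset\mathbb{C}$ disconnects $C\subset\mathbb{C}$ if $C\cap A=\emptyset$ and at least two different connected components of $\mathbb{C}\setminus A$ intersect $C$. *)

(* Defs.v *)
From Stdlib Require Import Reals.
Open Scope R_scope.

Definition Cplx := (R * R)%type.

Definition cdist (z w : Cplx) : R :=
  sqrt ((fst z - fst w) ^ 2 + (snd z - snd w) ^ 2).

Definition is_open (U : Cplx -> Prop) : Prop :=
  forall z, U z -> exists eps, 0 < eps /\ forall w, cdist z w < eps -> U w.

Definition is_closed (A : Cplx -> Prop) : Prop :=
  is_open (fun z => ~ A z).

(* S is connected (in the subspace topology): no two open sets of C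
   separate S into two nonempty disjoint relatively open pieces. *)
Definition connected (S : Cplx -> Prop) : Prop :=
  ~ exists U V : Cplx -> Prop,
      is_open U /\ is_open V /\
      (forall z, S z -> U z \/ V z) /\
      (exists z, S z /\ U z) /\ (exists z, S z /\ V z) /\
      (forall z, S z -> U z -> V z -> False).

Definition component (X : Cplx -> Prop) (x : Cplx) : Cplx -> Prop :=
  fun y => exists K : Cplx -> Prop,
    (forall z, K z -> X z) /\ connected K /\ K x /\ K y.

Definition is_component (X K : Cplx -> Prop) : Prop :=
  exists x, X x /\ forall y, K y <-> component X x y.

Definition disconnects (A C : Cplx -> Prop) : Prop :=
  (forall z, C z -> ~ A z) /\
  exists K1 K2 : Cplx -> Prop,
    is_component (fun z => ~ A z) K1 /\
    is_component (fun z => ~ A z) K2 /\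
    ~ (forall z, K1 z <-> K2 z) /\
    (exists z, C z /\ K1 z) /\ (exists z, C z /\ K2 z).

(* Main.v *)
Require Import Defs.
From Stdlib Require Import Reals Lra Lia Psatz Classical ClassicalEpsilon ZArith.
Open Scope R_scope.

Definition sq_d (z w : Cplx) := (fst z - fst w)^2 + (snd z - snd w)^2.

Lemma sq_d_nonneg z w : 0 <= sq_d z w.
Proof. unfold sq_d. pose proof (pow2_ge_0 (fst z - fst w)). pose proof (pow2_ge_0 (snd z - snd w)). lra. Qed.

Lemma cdist_nonneg z w : 0 <= cdist z w.
Proof. apply sqrt_pos. Qed.

Lemma cdist_sym z w : cdist z w = cdist w z.
Proof. unfold cdist; f_equal; ring. Qed.

Lemma cdist_refl z : cdist z z = 0.
Proof. unfold cdist. replace ((fst z - fst z) ^ 2 + (snd z - snd z) ^ 2) with 0 by ring.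
apply sqrt_0. Qed.

Lemma cdist_sq z w : (cdist z w)^2 = sq_d z w.
Proof. unfold cdist. apply pow2_sqrt. apply sq_d_nonneg. Qed.

Lemma cdist_lt z w e : 0 < e -> (cdist z w < e <-> sq_d z w < e^2).
Proof.
intros He. pose proof (cdist_nonneg z w). rewrite <- cdist_sq. split; intro H'.
- nra.
- destruct (Rlt_le_dec (cdist z w) e); auto. nra.
Qed.

Lemma cdist_le_iff z w e : 0 <= e -> (cdist z w <= e <-> sq_d z w <= e^2).
Proof.
intros He. pose proof (cdist_nonneg z w). rewrite <- cdist_sq. split; intro H'.
- nra.
- destruct (Rle_lt_dec (cdist z w) e); auto. nra.
Qed.

Lemma cdist_fst z w : Rabs (fst z - fst w) <= cdist z w.
Proof.
pose proof (cdist_nonneg z w). pose proof (cdist_sq z w). unfold sq_d in *.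
set (c := cdist z w) in *. set (a := fst z - fst w) in *. set (b := snd z - snd w) in *.
apply Rabs_le. split; nra.
Qed.

Lemma cdist_snd z w : Rabs (snd z - snd w) <= cdist z w.
Proof.
pose proof (cdist_nonneg z w). pose proof (cdist_sq z w). unfold sq_d in *.
set (c := cdist z w) in *. set (a := fst z - fst w) in *. set (b := snd z - snd w) in *.
apply Rabs_le. split; nra.
Qed.

Lemma cdist_tri z w u : cdist z u <= cdist z w + cdist w u.
Proof.
pose proof (cdist_nonneg z w) as H1. pose proof (cdist_nonneg w u) as H2.
apply cdist_le_iff. lra.
pose proof (cdist_sq z w) as E1. pose proof (cdist_sq w u) as E2. unfold sq_d in *.
set (a := cdist z w) in *. set (b := cdist w u) in *.
set (x1 := fst z - fst w) in *. set (x2 := snd z - snd w) in *.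
set (y1 := fst w - fst u) in *. set (y2 := snd w - snd u) in *.
replace (fst z - fst u) with (x1 + y1) by (unfold x1, y1; ring).
replace (snd z - snd u) with (x2 + y2) by (unfold x2, y2; ring).
assert (x1*y1 + x2*y2 <= a*b).
{ destruct (Rle_lt_dec (x1*y1+x2*y2) 0). nra.
  assert ((x1*y1+x2*y2)^2 <= (a*b)^2).
  { replace ((a*b)^2) with (a^2*b^2) by ring. rewrite E1, E2. pose proof (pow2_ge_0 (x1*y2 - x2*y1)). nra. }
  destruct (Rle_lt_dec (x1*y1+x2*y2) (a*b)); auto.
  assert (0 <= a*b) by (apply Rmult_le_pos; auto).
  assert ((a*b)*(a*b) < (x1*y1+x2*y2)*(x1*y1+x2*y2)) by (apply Rmult_le_0_lt_compat; auto).
  nra. }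
nra.
Qed.

Definition ball (c : Cplx) (r : R) : Cplx -> Prop := fun w => cdist c w < r.

Lemma ball_open c r : is_open (ball c r).
Proof.
intros z Hz. unfold ball in *. exists (r - cdist c z). split. lra.
intros w Hw. pose proof (cdist_tri c z w). lra.
Qed.

Lemma open_and U V : is_open U -> is_open V -> is_open (fun z => U z /\ V z).
Proof.
intros HU HV z [Uz Vz]. destruct (HU z Uz) as [e1 [He1 H1]].
destruct (HV z Vz) as [e2 [He2 H2]]. exists (Rmin e1 e2). split.
apply Rmin_pos; auto. intros w Hw. split.
apply H1. pose proof (Rmin_l e1 e2). lra. apply H2. pose proof (Rmin_r e1 e2). lra.
Qed.

Definition clos (S : Cplx -> Prop) : Cplx -> Prop :=
  fun z => forall e, 0 < e -> exists w, S w /\ cdist z w < e.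

Lemma clos_incl S z : S z -> clos S z.
Proof. intros H e He. exists z. split; auto. rewrite cdist_refl; auto. Qed.

Lemma not_clos_open S : is_open (fun z => ~ clos S z).
Proof.
intros z Hz. apply not_all_ex_not in Hz. destruct Hz as [e He].
apply imply_to_and in He. destruct He as [He Hn].
exists (e/2). split. lra. intros w Hw Hc.
destruct (Hc (e/2)) as [u [Su Hu]]. lra.
apply Hn. exists u. split; auto. pose proof (cdist_tri z w u). lra.
Qed.

Lemma open_clos_disj U S : is_open U -> (forall z, U z -> S z -> False) ->
  forall z, U z -> clos S z -> False.
Proof.
intros HU H z Uz Cz. destruct (HU z Uz) as [e [He He']].
destruct (Cz e He) as [w [Sw Hw]]. exact (H w (He' w Hw) Sw).
Qed.

Lemma real_ind (Q : R -> Prop) :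
  (forall m, 0 <= m <= 1 -> (forall s, 0 <= s < m -> Q s) ->
     exists eta, 0 < eta /\ forall s, 0 <= s <= 1 -> s < m + eta -> Q s) ->
  forall s, 0 <= s <= 1 -> Q s.
Proof.
intros H.
set (E := fun s => 0 <= s <= 1 /\ forall t, 0 <= t <= s -> Q t).
destruct (H 0) as [e0 [He0 H0]]. lra. intros; lra.
assert (bE : bound E) by (exists 1; intros x [Hx _]; lra).
assert (E0 : E 0) by (split; [lra| intros t Ht; apply H0; lra]).
assert (nE : exists x, E x) by (exists 0; auto).
destruct (completeness E bE nE) as [m [Hub Hlub]].
assert (m0 : 0 <= m) by (apply Hub; auto).
assert (m1 : m <= 1) by (apply Hlub; intros x [Hx _]; lra).
assert (Hbelow : forall s, 0 <= s < m -> Q s).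
{ intros s Hs. destruct (classic (exists x, E x /\ s < x)) as [[x [[_ Ex] Hx]]|Hn].
  apply Ex; lra.
  assert (m <= s). { apply Hlub. intros x Ex. destruct (Rle_lt_dec x s); auto.
    exfalso; apply Hn; eauto. } lra. }
destruct (H m (conj m0 m1) Hbelow) as [eta [Heta Hm]].
assert (m = 1).
{ destruct (Rle_lt_dec 1 m). lra.
  assert (HE : E (Rmin 1 (m + eta/2))).
  { pose proof (Rmin_l 1 (m+eta/2)). pose proof (Rmin_r 1 (m+eta/2)).
    split. split. apply Rmin_glb; lra. auto.
    intros t Ht. apply Hm; lra. }
  apply Hub in HE. unfold Rmin in HE. destruct (Rle_dec 1 (m + eta/2)); lra. }
intros s Hs. apply Hm; lra.
Qed.

Lemma connected_union_pt (S : Cplx -> Prop) x0 :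
  S x0 -> (forall y, S y -> exists K, connected K /\ (forall z, K z -> S z) /\ K x0 /\ K y) ->
  connected S.
Proof.
intros Sx0 H [U [V [HU [HV [Hc [[u [Su Uu]] [[v [Sv Vv]] Hd]]]]]]].
destruct (Hc x0 Sx0) as [Ux|Vx].
- destruct (H v Sv) as [K [HK [KS [Kx Kv]]]]. apply HK. exists U, V.
  split; auto. split; auto. split. intros; apply Hc; auto. split. exists x0; auto. split. exists v; auto.
  intros z Kz; apply Hd; auto.
- destruct (H u Su) as [K [HK [KS [Kx Ku]]]]. apply HK. exists U, V.
  split; auto. split; auto. split. intros; apply Hc; auto. split. exists u; auto. split. exists x0; auto.
  intros z Kz; apply Hd; auto.
Qed.

Lemma connected_empty (S : Cplx -> Prop) : (forall z, ~ S z) -> connected S.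
Proof. intros H [U [V [_ [_ [_ [[u [Su _]] _]]]]]]. exact (H u Su). Qed.

Lemma connected_single x : connected (fun z => z = x).
Proof.
intros [U [V [_ [_ [_ [[u [Su Uu]] [[v [Sv Vv]] Hd]]]]]]]. subst.
exact (Hd x eq_refl Uu Vv).
Qed.

Definition seg (z w : Cplx) (t : R) : Cplx :=
  (fst z + t * (fst w - fst z), snd z + t * (snd w - snd z)).

Lemma seg0 z w : seg z w 0 = z.
Proof. destruct z; unfold seg; simpl; f_equal; ring. Qed.
Lemma seg1 z w : seg z w 1 = w.
Proof. destruct w; unfold seg; simpl; f_equal; ring. Qed.

Lemma cdist_seg z w s t : cdist (seg z w s) (seg z w t) = Rabs (s - t) * cdist z w.
Proof.
unfold cdist, seg; cbn [fst snd].
replace ((fst z + s * (fst w - fst z) - (fst z + t * (fst w - fst z))) ^ 2 +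
   (snd z + s * (snd w - snd z) - (snd z + t * (snd w - snd z))) ^ 2) with
  (Rabs (s - t) ^ 2 * ((fst z - fst w) ^ 2 + (snd z - snd w) ^ 2)).
2:{ rewrite pow2_abs. ring. }
rewrite sqrt_mult. rewrite sqrt_pow2. auto. apply Rabs_pos.
apply pow2_ge_0. pose proof (pow2_ge_0 (fst z - fst w)). pose proof (pow2_ge_0 (snd z - snd w)). lra.
Qed.

Definition segment (z w : Cplx) : Cplx -> Prop :=
  fun y => exists t, 0 <= t <= 1 /\ y = seg z w t.

Lemma seg_stay z w (U V : Cplx -> Prop) : is_open U -> is_open V ->
  (forall t, 0<=t<=1 -> U (seg z w t) \/ V (seg z w t)) ->
  (forall t, 0<=t<=1 -> U (seg z w t) -> V (seg z w t) -> False) -> U z ->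
  forall t, 0<=t<=1 -> U (seg z w t).
Proof.
intros HU HV Hc Hd Uz. apply real_ind. intros m Hm Hb.
pose proof (cdist_nonneg z w) as Hd0.
destruct (Hc m Hm) as [Um|Vm].
- destruct (HU _ Um) as [r [Hr Hr']]. exists (r / (cdist z w + 1)). split.
  apply Rdiv_lt_0_compat; lra.
  intros s Hs Hsm. destruct (Rlt_le_dec s m). apply Hb; lra.
  apply Hr'. rewrite cdist_seg. rewrite Rabs_minus_sym, Rabs_right by lra.
  assert ((s - m) < r / (cdist z w + 1)) by lra.
  apply Rmult_lt_compat_r with (r := cdist z w + 1) in H; [|lra].
  unfold Rdiv in H. rewrite Rmult_assoc, Rinv_l in H by lra. nra.
- exfalso. destruct (HV _ Vm) as [r [Hr Hr']].
  destruct (Req_dec m 0) as [->|Hm0].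
  + rewrite seg0 in Vm. exact (Hd 0 ltac:(lra) ltac:(rewrite seg0; auto) ltac:(rewrite seg0; auto)).
  + set (s := Rmax 0 (m - r / (2 * (cdist z w + 1)))).
    assert (Hpos : 0 < r / (2 * (cdist z w + 1))) by (apply Rdiv_lt_0_compat; lra).
    assert (Hs0 : 0 <= s) by apply Rmax_l.
    assert (Hsm : s < m). { unfold s, Rmax. destruct (Rle_dec 0 (m - r / (2 * (cdist z w + 1)))); lra. }
    assert (Hs2 : m - s <= r / (2 * (cdist z w + 1))).
    { unfold s, Rmax. destruct (Rle_dec 0 (m - r / (2 * (cdist z w + 1)))); lra. }
    apply (Hd s). lra. apply Hb; lra. apply Hr'.
    rewrite cdist_seg. rewrite Rabs_right by lra.
    apply Rmult_le_compat_r with (r := 2*(cdist z w + 1)) in Hs2; [|lra].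
    unfold Rdiv in Hs2. rewrite Rmult_assoc, Rinv_l in Hs2 by lra. nra.
Qed.

Lemma segment_connected z w : connected (segment z w).
Proof.
intros [U [V [HU [HV [Hc [[u [Su Uu]] [[v [Sv Vv]] Hd]]]]]]].
assert (Hc' : forall t, 0<=t<=1 -> U (seg z w t) \/ V (seg z w t)).
{ intros t Ht. apply Hc. exists t; auto. }
assert (Hd' : forall t, 0<=t<=1 -> U (seg z w t) -> V (seg z w t) -> False).
{ intros t Ht. apply Hd. exists t; auto. }
destruct (Hc' 0 ltac:(lra)) as [U0|V0]; rewrite seg0 in *.
- destruct Sv as [t [Ht ->]]. apply (Hd' t Ht); auto. apply (seg_stay z w U V); auto.
- destruct Su as [t [Ht ->]]. apply (Hd' t Ht); auto. apply (seg_stay z w V U); auto.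
  intros; destruct (Hc' t0); auto. intros; eapply Hd'; eauto.
Qed.

Lemma ball_connected c r : connected (ball c r).
Proof.
destruct (Rlt_le_dec 0 r) as [Hr|Hr].
2:{ apply connected_empty. intros z Hz. unfold ball in Hz. pose proof (cdist_nonneg c z). lra. }
apply (connected_union_pt _ c). unfold ball; rewrite cdist_refl; auto.
intros y Hy. exists (segment c y). split. apply segment_connected. split.
- intros z [t [Ht ->]]. unfold ball in *. rewrite <- (seg0 c y) at 1. rewrite cdist_seg.
  unfold ball in Hy. rewrite Rabs_left1 by lra. pose proof (cdist_nonneg c y). nra.
- split. exists 0. rewrite seg0. split; auto; lra. exists 1. rewrite seg1. split; auto; lra.
Qed.

Lemma comp_sub X x y : component X x y -> X y.
Proof. intros [K [KX [_ [_ Ky]]]]. auto. Qed.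

Lemma comp_self X x : X x -> component X x x.
Proof. intros Hx. exists (fun z => z = x). repeat split; auto.
intros z ->; auto. apply connected_single. Qed.

Lemma comp_x X x y : component X x y -> component X x x.
Proof. intros [K [KX [HK [Kx _]]]]. exists K; auto. Qed.

Lemma comp_connected X x : connected (component X x).
Proof.
destruct (classic (exists y, component X x y)) as [[y Hy]|Hn].
- apply (connected_union_pt _ x). eapply comp_x; eauto.
  intros z [K [KX [HK [Kx Kz]]]]. exists K. repeat split; auto.
  intros u Ku. exists K; auto.
- apply connected_empty. intros z Hz; apply Hn; eauto.
Qed.

Lemma connected_union2 (K1 K2 : Cplx -> Prop) z0 :
  connected K1 -> connected K2 -> K1 z0 -> K2 z0 -> connected (fun z => K1 z \/ K2 z).
Proof.
intros H1 H2 H1z H2z. apply (connected_union_pt _ z0). auto.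
intros y [Hy|Hy]. exists K1; repeat split; auto. exists K2; repeat split; auto.
Qed.

Lemma comp_absorb X x (K : Cplx -> Prop) : connected K -> (forall z, K z -> X z) ->
  (exists z, K z /\ component X x z) -> forall z, K z -> component X x z.
Proof.
intros HK KX [z0 [Kz0 [K0 [K0X [HK0 [K0x K0z0]]]]]] z Kz.
exists (fun w => K w \/ K0 w). split.
intros w [Hw|Hw]; auto. split. apply (connected_union2 K K0 z0); auto. split; [right|left]; auto.
Qed.

Lemma comp_open X x : is_open X -> is_open (component X x).
Proof.
intros HX y Hy. destruct (HX y (comp_sub _ _ _ Hy)) as [r [Hr Hr']].
exists r. split; auto. intros w Hw.
apply (comp_absorb X x (ball y r)); auto. apply ball_connected.
exists y. split; auto. unfold ball; rewrite cdist_refl; auto.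
Qed.

Lemma comp_eq X x y : component X x y -> forall w, component X x w <-> component X y w.
Proof.
intros Hy w. split; intro Hw.
- apply (comp_absorb X y (component X x)); auto. apply comp_connected.
  intros; eapply comp_sub; eauto. exists y; split; auto. apply comp_self. eapply comp_sub; eauto.
- apply (comp_absorb X x (component X y)); auto. apply comp_connected.
  intros; eapply comp_sub; eauto. exists y; split; auto. apply comp_self. eapply comp_sub; eauto.
Qed.

Lemma backward C A : is_closed A -> disconnects A C -> ~ connected C.
Proof.
intros HA [HCA [K1 [K2 [[x1 [Ax1 H1]] [[x2 [Ax2 H2]] [Hne [[z1 [Cz1 K1z1]] [z2 [Cz2 K2z2]]]]]]]]] Hconn.
set (X := fun z => ~ A z).
apply Hconn. exists (component X x1), (fun z => X z /\ ~ component X x1 z).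
split. apply comp_open. exact HA.
split.
{ intros z [Xz Nz]. destruct (HA z Xz) as [r [Hr Hr']]. exists r; split; auto.
  intros w Hw. split. apply Hr'; auto. intro Cw. apply Nz.
  apply (comp_absorb X x1 (ball z r)); auto. apply ball_connected.
  exists w. split; auto. unfold ball; rewrite cdist_refl; auto. }
split. intros z Cz. destruct (classic (component X x1 z)); auto. right; split; auto. apply HCA; auto.
split. exists z1; split; auto. apply H1; auto.
split.
{ exists z2. split; auto. split. apply HCA; auto. intro Hc. apply Hne.
  intro w. rewrite H1, H2. apply H2 in K2z2.
  pose proof (comp_eq X x1 z2 Hc w). pose proof (comp_eq X x2 z2 K2z2 w). unfold X in *. tauto. }
intros z _ Hz [_ Hn]; auto.
Qed.

Definition unit (u : Cplx) := fst u ^ 2 + snd u ^ 2 = 1.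
Definition cmc (u v : Cplx) : Cplx :=
  (fst u * fst v + snd u * snd v, snd u * fst v - fst u * snd v).
Definition ang (w : Cplx) := 2 * atan (snd w / (1 + fst w)).
Definition rel (u v : Cplx) := ang (cmc u v).

Lemma ang_spec w : unit w -> -1 < fst w -> cos (ang w) = fst w /\ sin (ang w) = snd w.
Proof.
unfold unit, ang. destruct w as [a b]; cbn [fst snd]. intros Hu Ha.
set (x := b / (1 + a)).
assert (Hx2 : x^2 = (1 - a) / (1 + a)).
{ unfold x. unfold Rdiv. rewrite Rpow_mult_distr. replace (b^2) with ((1-a)*(1+a)) by lra. field. lra. }
assert (H1x : 1 + x^2 = 2 / (1 + a)).
{ rewrite Hx2. field. lra. }
assert (Hs : sqrt (1 + x²) ^ 2 = 1 + x^2).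
{ rewrite pow2_sqrt. unfold Rsqr; ring. unfold Rsqr. pose proof (pow2_ge_0 x). nra. }
assert (Hspos : 0 < sqrt (1 + x²)). { apply sqrt_lt_R0. unfold Rsqr. nra. }
rewrite cos_2a, sin_2a, cos_atan, sin_atan.
set (s := sqrt (1 + x²)) in *.
split.
- replace (1 / s * (1 / s) - x / s * (x / s)) with ((1 - x^2) / s^2) by (field; lra).
  rewrite Hs, H1x, Hx2. field. lra.
- replace (2 * (x / s) * (1 / s)) with (2 * x / s^2) by (field; lra).
  rewrite Hs, H1x. unfold x. field. lra.
Qed.

Lemma unit_cmc u v : unit u -> unit v -> unit (cmc u v).
Proof.
unfold unit, cmc; cbn [fst snd]. intros Hu Hv.
replace ((fst u * fst v + snd u * snd v) ^ 2 + (snd u * fst v - fst u * snd v) ^ 2)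
  with ((fst u ^ 2 + snd u ^ 2) * (fst v ^ 2 + snd v ^ 2)) by ring.
rewrite Hu, Hv; ring.
Qed.

Lemma cmc_fst u v : unit u -> unit v -> fst (cmc u v) = 1 - sq_d u v / 2.
Proof.
unfold unit, cmc, sq_d; cbn [fst snd]. intros Hu Hv. nra.
Qed.

Lemma rel_spec u v al : unit u -> unit v -> sq_d u v < 4 ->
  fst v = cos al -> snd v = sin al ->
  fst u = cos (al + rel u v) /\ snd u = sin (al + rel u v).
Proof.
intros Hu Hv Hd Hc Hs.
assert (Hw : -1 < fst (cmc u v)). { rewrite cmc_fst; auto. lra. }
destruct (ang_spec (cmc u v) (unit_cmc u v Hu Hv) Hw) as [Ca Sa].
unfold rel. rewrite cos_plus, sin_plus, Ca, Sa. unfold cmc; cbn [fst snd].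
rewrite <- Hc, <- Hs. unfold unit in Hv. split.
- transitivity (fst u * (fst v^2 + snd v^2)). rewrite Hv; ring. ring.
- transitivity (snd u * (fst v^2 + snd v^2)). rewrite Hv; ring. ring.
Qed.

Lemma rel_self u : unit u -> rel u u = 0.
Proof.
unfold rel, ang, cmc, unit; cbn [fst snd]. intros Hu.
replace (snd u * fst u - fst u * snd u) with 0 by ring.
unfold Rdiv; rewrite Rmult_0_l, atan_0; ring.
Qed.

Lemma angle_exists u : unit u -> exists t, fst u = cos t /\ snd u = sin t.
Proof.
intros Hu. destruct (Rlt_le_dec (-1) (fst u)) as [H|H].
- exists (ang u). destruct (ang_spec u Hu H); auto.
- exists PI. rewrite cos_PI, sin_PI. unfold unit in Hu.
  pose proof (pow2_ge_0 (snd u)). assert (fst u = -1) by nra. split; auto. nra.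
Qed.

Lemma eq_angle a b : cos a = cos b -> sin a = sin b -> Rabs (a - b) < 2 * PI -> a = b.
Proof.
intros Hc Hs Hab.
assert (S0 : sin (a - b) = 0). { rewrite sin_minus, Hc, Hs. ring. }
assert (C1 : cos (a - b) = 1). { rewrite cos_minus, Hc, Hs. rewrite <- (sin2_cos2 b). unfold Rsqr; ring. }
destruct (sin_eq_0_0 _ S0) as [k Hk].
pose proof PI_RGT_0.
assert (Hk2 : -2 < IZR k < 2).
{ rewrite Hk in Hab. rewrite Rabs_mult, (Rabs_right PI) in Hab by lra.
  assert (Rabs (IZR k) < 2) by nra. apply Rabs_def2 in H0. lra. }
destruct Hk2 as [Hk1 Hk2]. apply lt_IZR in Hk1. apply lt_IZR in Hk2.
assert (Hk3 : (k = 0 \/ k = 1 \/ k = -1)%Z) by lia. destruct Hk3 as [->|[->| ->]].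
- lra.
- rewrite Hk in C1. rewrite Rmult_1_l, cos_PI in C1. lra.
- rewrite Hk in C1. replace (IZR (-1) * PI) with (- PI) in C1 by (simpl; ring).
  rewrite cos_neg, cos_PI in C1. lra.
Qed.

Lemma rel_bound u v : unit u -> unit v -> cdist u v < 1/2 -> Rabs (rel u v) < PI / 2.
Proof.
intros Hu Hv Hd. apply cdist_lt in Hd; [|lra].
pose proof (cmc_fst u v Hu Hv) as Hf. pose proof (unit_cmc u v Hu Hv) as Hw.
unfold rel, ang. set (w := cmc u v) in *. unfold unit in Hw.
pose proof (sq_d_nonneg u v).
set (x := snd w / (1 + fst w)).
assert (Hx : -1 < x < 1).
{ unfold x. assert (0 < 1 + fst w) by lra. split.
  - apply Rmult_lt_reg_r with (1 + fst w); auto. unfold Rdiv. rewrite Rmult_assoc, Rinv_l; nra.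
  - apply Rmult_lt_reg_r with (1 + fst w); auto. unfold Rdiv. rewrite Rmult_assoc, Rinv_l; nra. }
assert (-(PI/4) < atan x < PI/4).
{ rewrite <- atan_1. rewrite <- atan_opp. split; apply atan_increasing; lra. }
apply Rabs_def1; lra.
Qed.

Lemma rel_add a b c : unit a -> unit b -> unit c ->
  cdist a b < 1/2 -> cdist b c < 1/2 -> cdist a c < 1/2 ->
  rel a c = rel a b + rel b c.
Proof.
intros Ha Hb Hc Hab Hbc Hac.
destruct (angle_exists c Hc) as [g [Cg Sg]].
assert (L : forall u v, cdist u v < 1/2 -> sq_d u v < 4).
{ intros u v H. apply cdist_lt in H; lra. }
destruct (rel_spec b c g Hb Hc (L _ _ Hbc) Cg Sg) as [Cb Sb].
destruct (rel_spec a b (g + rel b c) Ha Hb (L _ _ Hab) Cb Sb) as [Ca Sa].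
destruct (rel_spec a c g Ha Hc (L _ _ Hac) Cg Sg) as [Ca' Sa'].
pose proof (rel_bound _ _ Ha Hb Hab). pose proof (rel_bound _ _ Hb Hc Hbc).
pose proof (rel_bound _ _ Ha Hc Hac).
assert (g + rel a c = g + rel b c + rel a b).
{ apply eq_angle. congruence. congruence.
  apply Rabs_def1; apply Rabs_def2 in H; apply Rabs_def2 in H0; apply Rabs_def2 in H1; lra. }
lra.
Qed.

Lemma rel_small eps : 0 < eps -> exists eta, 0 < eta /\
  forall u v, unit u -> unit v -> cdist u v < eta -> Rabs (rel u v) < eps.
Proof.
intros He.
pose proof (derivable_continuous_pt _ _ (derivable_pt_atan 0)) as Hc.
destruct (Hc (eps/2)) as [al [Hal Hal']]. lra.
exists (Rmin al (1/2)). split. apply Rmin_pos; lra.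
intros u v Hu Hv Hd.
pose proof (cmc_fst u v Hu Hv) as Hf. pose proof (unit_cmc u v Hu Hv) as Hw.
assert (Hd1 : cdist u v < al) by (pose proof (Rmin_l al (1/2)); lra).
assert (Hd2 : cdist u v < 1/2) by (pose proof (Rmin_r al (1/2)); lra).
apply cdist_lt in Hd1; [|lra]. apply cdist_lt in Hd2; [|lra].
pose proof (sq_d_nonneg u v).
unfold rel, ang. set (w := cmc u v) in *. unfold unit in Hw.
set (x := snd w / (1 + fst w)).
assert (Hx : x^2 < al^2).
{ unfold x. assert (0 < 1 + fst w) by lra.
  assert (snd w ^ 2 <= sq_d u v) by nra.
  unfold Rdiv. rewrite Rpow_mult_distr. 
  assert (0 < / (1 + fst w) <= 1). { split. apply Rinv_0_lt_compat; lra.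
    rewrite <- Rinv_1. apply Rinv_le_contravar; lra. }
  assert (0 <= (/ (1 + fst w))^2 <= 1) by (split; nra).
  pose proof (pow2_ge_0 (snd w)). nra. }
destruct (Req_dec x 0) as [E|E].
- rewrite E, atan_0. rewrite Rmult_0_r, Rabs_R0. lra.
- assert (Hlt : Rabs x < al).
  { destruct (Rlt_le_dec (Rabs x) al); auto. rewrite <- (pow2_abs x) in Hx.
    pose proof (Rabs_pos x). nra. }
  assert (Hat : Rabs (atan x - atan 0) < eps/2).
  { apply (Hal' x). split. split. exact I. auto. simpl. unfold R_dist. rewrite Rminus_0_r. auto. }
  rewrite atan_0, Rminus_0_r in Hat. rewrite Rabs_mult, Rabs_right by lra. lra.
Qed.

Definition org : Cplx := (0, 0).
Definition ctsC (phi : Cplx -> Cplx) := forall z e, 0 < e -> exists d, 0 < d /\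
  forall w, cdist z w < d -> cdist (phi z) (phi w) < e.

Lemma cdist_seg2 z z' t : cdist (seg org z t) (seg org z' t) = Rabs t * cdist z z'.
Proof.
unfold cdist, seg, org; cbn [fst snd].
replace ((0 + t * (fst z - 0) - (0 + t * (fst z' - 0))) ^ 2 +
   (0 + t * (snd z - 0) - (0 + t * (snd z' - 0))) ^ 2) with
  (Rabs t ^ 2 * ((fst z - fst z') ^ 2 + (snd z - snd z') ^ 2)).
2:{ rewrite pow2_abs. ring. }
rewrite sqrt_mult. rewrite sqrt_pow2. auto. apply Rabs_pos.
apply pow2_ge_0. pose proof (pow2_ge_0 (fst z - fst z')). pose proof (pow2_ge_0 (snd z - snd z')). lra.
Qed.

Lemma cdist_tri3 a b c d : cdist a d <= cdist a b + cdist b c + cdist c d.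
Proof. pose proof (cdist_tri a b d). pose proof (cdist_tri b c d). lra. Qed.

Lemma tube phi z0 e : ctsC phi -> 0 < e -> exists rho, 0 < rho /\
  forall t, 0 <= t <= 1 -> forall w, cdist (seg org z0 t) w < rho ->
  cdist (phi (seg org z0 t)) (phi w) < e.
Proof.
intros Hphi He.
set (d := cdist org z0). pose proof (cdist_nonneg org z0) as Hd0. fold d in Hd0.
set (Q := fun s => exists rho, 0 < rho /\ forall t, 0 <= t <= s -> forall w,
   cdist (seg org z0 t) w < rho -> cdist (phi (seg org z0 t)) (phi w) < e).
assert (HQ : Q 1).
{ apply real_ind; [|lra]. intros m Hm Hb.
  destruct (Hphi (seg org z0 m) (e/2)) as [d1 [Hd1 Hd1']]. lra.
  set (eta := d1 / (2 * (d + 1))).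
  assert (Heta : 0 < eta) by (apply Rdiv_lt_0_compat; lra).
  assert (Hclose : forall t, Rabs (t - m) < eta -> forall w, cdist (seg org z0 t) w < d1/2 ->
     cdist (phi (seg org z0 t)) (phi w) < e).
  { intros t Ht w Hw.
    assert (Hpm : cdist (seg org z0 m) (seg org z0 t) < d1/2).
    { rewrite cdist_seg. fold d. rewrite Rabs_minus_sym.
      assert (Rabs (t - m) * (2*(d+1)) < d1).
      { apply Rmult_lt_compat_r with (r := 2*(d+1)) in Ht; [|lra].
        unfold eta, Rdiv in Ht. rewrite Rmult_assoc, Rinv_l in Ht by lra. lra. }
      pose proof (Rabs_pos (t - m)). nra. }
    pose proof (Hd1' (seg org z0 t) ltac:(lra)). 
    assert (cdist (seg org z0 m) w < d1) by (pose proof (cdist_tri (seg org z0 m) (seg org z0 t) w); lra).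
    pose proof (Hd1' _ H0). pose proof (cdist_tri (phi (seg org z0 t)) (phi (seg org z0 m)) (phi w)).
    rewrite cdist_sym in H. lra. }
  exists eta. split; auto. intros s Hs Hsm.
  destruct (Rle_lt_dec 0 (m - eta/2)) as [Hp|Hn].
  - destruct (Hb (m - eta/2)) as [r1 [Hr1 Hr1']]. lra.
    exists (Rmin r1 (d1/2)). split. apply Rmin_pos; lra.
    intros t Ht w Hw. destruct (Rle_lt_dec t (m - eta/2)).
    + apply Hr1'. lra. pose proof (Rmin_l r1 (d1/2)). lra.
    + apply Hclose. apply Rabs_def1; lra. pose proof (Rmin_r r1 (d1/2)). lra.
  - exists (d1/2). split. lra. intros t Ht w Hw. apply Hclose; auto. apply Rabs_def1; lra. }
destruct HQ as [rho [Hr Hr']]. exists rho. split; auto.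
Qed.

Definition good phi z N e := (0 < N)%nat /\ forall a b, 0 <= a <= 1 -> 0 <= b <= 1 ->
  Rabs (a - b) <= / INR N -> cdist (phi (seg org z a)) (phi (seg org z b)) < e.

Lemma near_good phi z0 : ctsC phi -> exists rho N, 0 < rho /\ good phi z0 N (1/8) /\
  forall z, cdist z0 z < rho -> good phi z N (3/8) /\
    forall t, 0 <= t <= 1 -> cdist (phi (seg org z0 t)) (phi (seg org z t)) < 1/8.
Proof.
intros Hphi. destruct (tube phi z0 (1/8) Hphi) as [rho [Hr Hr']]. lra.
set (d := cdist org z0). pose proof (cdist_nonneg org z0) as Hd0. fold d in Hd0.
destruct (INR_unbounded (d / rho)) as [N0 HN0].
set (N := S N0).
assert (HN : INR N > d / rho) by (unfold N; rewrite S_INR; lra).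
assert (HNp : 0 < INR N) by (unfold N; apply lt_0_INR; lia).
assert (HdN : d * / INR N < rho).
{ apply Rmult_lt_reg_r with (INR N); auto. rewrite Rmult_assoc, Rinv_l by lra.
  apply Rmult_lt_reg_r with (/rho). apply Rinv_0_lt_compat; lra.
  rewrite Rmult_1_r. replace (rho * INR N * / rho) with (INR N) by (field; lra). lra. }
assert (G0 : good phi z0 N (1/8)).
{ split. unfold N; lia. intros a b Ha Hb Hab. apply Hr'; auto.
  rewrite cdist_seg. fold d. pose proof (Rabs_pos (a - b)).
  assert (Rabs (a - b) * d <= / INR N * d) by (apply Rmult_le_compat_r; auto). nra. }
exists rho, N. split; auto. split; auto.
intros z Hz.
assert (Ht : forall t, 0 <= t <= 1 -> cdist (phi (seg org z0 t)) (phi (seg org z t)) < 1/8).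
{ intros t Ht. apply Hr'; auto. rewrite cdist_seg2. rewrite Rabs_right by lra.
  pose proof (cdist_nonneg z0 z). nra. }
split; auto. split. unfold N; lia.
intros a b Ha Hb Hab.
pose proof (Ht a Ha). pose proof (Ht b Hb). pose proof (proj2 G0 a b Ha Hb Hab).
pose proof (cdist_tri3 (phi (seg org z a)) (phi (seg org z0 a)) (phi (seg org z0 b)) (phi (seg org z b))).
rewrite cdist_sym in H. lra.
Qed.

Fixpoint sumk (f : nat -> R) (n : nat) : R :=
  match n with O => 0 | S m => sumk f m + f m end.

Lemma sumk_ext f g n : (forall k, (k < n)%nat -> f k = g k) -> sumk f n = sumk g n.
Proof.
induction n; simpl; intros H; auto. rewrite IHn. rewrite H; auto. intros; apply H; lia.
Qed.

Lemma sumk_add f a b : sumk f (a + b) = sumk f a + sumk (fun j => f (a + j)%nat) b.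
Proof.
induction b; simpl. rewrite Nat.add_0_r; ring. rewrite Nat.add_succ_r; simpl; rewrite IHb; ring.
Qed.

Lemma sumk_mul f N M : sumk f (N * M) = sumk (fun k => sumk (fun j => f (k * M + j)%nat) M) N.
Proof.
induction N; simpl; auto. replace (M + N * M)%nat with (N * M + M)%nat by lia.
rewrite sumk_add, IHN. auto.
Qed.

Definition pt z N k := seg org z (INR k / INR N).
Definition term phi z N k := rel (phi (pt z N (S k))) (phi (pt z N k)).
Definition Ssum phi z N := sumk (term phi z N) N.

Lemma par_range k N : (0 < N)%nat -> (k <= N)%nat -> 0 <= INR k / INR N <= 1.
Proof.
intros HN Hk. assert (0 < INR N) by (apply lt_0_INR; auto).
pose proof (pos_INR k). apply le_INR in Hk. split.
unfold Rdiv; apply Rmult_le_pos; [lra| left; apply Rinv_0_lt_compat; lra].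
apply Rmult_le_reg_r with (INR N); auto. unfold Rdiv. rewrite Rmult_assoc, Rinv_l; lra.
Qed.

Lemma par_step k N : (0 < N)%nat -> Rabs (INR (S k) / INR N - INR k / INR N) <= / INR N.
Proof.
intros HN. assert (0 < INR N) by (apply lt_0_INR; auto). rewrite S_INR.
replace ((INR k + 1) / INR N - INR k / INR N) with (/ INR N) by (field; lra).
rewrite Rabs_right. lra. left. apply Rinv_0_lt_compat; auto.
Qed.

Lemma pt0 z N : (0 < N)%nat -> pt z N 0 = org.
Proof. intros. unfold pt. simpl (INR 0). unfold Rdiv; rewrite Rmult_0_l. rewrite seg0. auto. Qed.

Lemma ptN z N : (0 < N)%nat -> pt z N N = z.
Proof. intros. unfold pt. assert (0 < INR N) by (apply lt_0_INR; auto).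
replace (INR N / INR N) with 1 by (field; lra). apply seg1. Qed.

Lemma lift_pts phi z N th0 : (forall z, unit (phi z)) -> good phi z N (1/2) ->
  fst (phi org) = cos th0 -> snd (phi org) = sin th0 ->
  forall k, (k <= N)%nat -> fst (phi (pt z N k)) = cos (th0 + sumk (term phi z N) k) /\
     snd (phi (pt z N k)) = sin (th0 + sumk (term phi z N) k).
Proof.
intros Hu [HN Hg] Hc Hs. induction k; intros Hk.
- simpl. rewrite pt0, Rplus_0_r; auto.
- destruct IHk as [Ck Sk]. lia. simpl.
  replace (th0 + (sumk (term phi z N) k + term phi z N k)) with
    ((th0 + sumk (term phi z N) k) + rel (phi (pt z N (S k))) (phi (pt z N k))) by (unfold term; ring).
  apply rel_spec; auto.
  assert (cdist (phi (pt z N (S k))) (phi (pt z N k)) < 1/2).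
  { apply Hg. apply par_range; auto. apply par_range; auto; lia. apply par_step; auto. }
  apply cdist_lt in H; lra.
Qed.

Lemma grid_close N M k i i' : (0 < N)%nat -> (0 < M)%nat -> (k < N)%nat ->
  (k * M <= i <= k * M + M)%nat -> (k * M <= i' <= k * M + M)%nat ->
  0 <= INR i / INR (N * M) <= 1 /\
  Rabs (INR i / INR (N * M) - INR i' / INR (N * M)) <= / INR N.
Proof.
intros HN HM Hk Hi Hi'. split. apply par_range. lia. nia.
assert (0 < INR N) by (apply lt_0_INR; auto). assert (0 < INR M) by (apply lt_0_INR; auto).
assert (H1 : INR i <= INR i' + INR M) by (rewrite <- plus_INR; apply le_INR; lia).
assert (H2 : INR i' <= INR i + INR M) by (rewrite <- plus_INR; apply le_INR; lia).
rewrite mult_INR.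
replace (INR i / (INR N * INR M) - INR i' / (INR N * INR M)) with ((INR i - INR i') / INR M * / INR N)
  by (field; lra).
rewrite Rabs_mult, (Rabs_right (/ INR N)) by (left; apply Rinv_0_lt_compat; auto).
rewrite <- (Rmult_1_l (/ INR N)) at 2. apply Rmult_le_compat_r. left; apply Rinv_0_lt_compat; auto.
unfold Rdiv. rewrite Rabs_mult, (Rabs_right (/ INR M)) by (left; apply Rinv_0_lt_compat; auto).
apply Rmult_le_reg_r with (INR M); auto. rewrite Rmult_assoc, Rinv_l, Rmult_1_r, Rmult_1_l by lra.
apply Rabs_le; lra.
Qed.

Lemma refine phi z N M : (forall z, unit (phi z)) -> good phi z N (1/2) -> (0 < M)%nat ->
  Ssum phi z N = Ssum phi z (N * M).
Proof.
intros Hu [HN Hg] HM. unfold Ssum. rewrite sumk_mul. apply sumk_ext. intros k Hk.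
set (q := fun i => phi (pt z (N * M) i)).
assert (Hd : forall i i', (k * M <= i <= k * M + M)%nat -> (k * M <= i' <= k * M + M)%nat ->
   cdist (q i) (q i') < 1/2).
{ intros i i' Hi Hi'. unfold q, pt.
  destruct (grid_close N M k i i' HN HM Hk Hi Hi') as [R1 R2].
  destruct (grid_close N M k i' i HN HM Hk Hi' Hi) as [R3 _].
  apply Hg; auto. }
assert (Inner : forall j, (j <= M)%nat ->
   sumk (fun j => term phi z (N * M) (k * M + j)) j = rel (q (k * M + j)%nat) (q (k * M)%nat)).
{ induction j; intros Hj.
  - simpl. rewrite Nat.add_0_r. unfold q. rewrite rel_self; auto.
  - simpl. rewrite IHj by lia. unfold term. fold (q (S (k * M + j))). fold (q (k * M + j)%nat).
    rewrite Nat.add_succ_r.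
    rewrite (rel_add (q (S (k * M + j))) (q (k * M + j)%nat) (q (k * M)%nat)); try (unfold q; auto).
    ring. all: apply Hd; lia. }
rewrite Inner by lia. unfold term, q. f_equal; f_equal; unfold pt; f_equal.
- assert (0 < INR N) by (apply lt_0_INR; auto). assert (0 < INR M) by (apply lt_0_INR; auto).
  rewrite plus_INR, !mult_INR, S_INR. field. lra.
- assert (0 < INR N) by (apply lt_0_INR; auto). assert (0 < INR M) by (apply lt_0_INR; auto).
  rewrite !mult_INR. field. lra.
Qed.

Lemma indep phi z N M : (forall z, unit (phi z)) -> good phi z N (1/2) -> good phi z M (1/2) ->
  Ssum phi z N = Ssum phi z M.
Proof.
intros Hu GN GM. rewrite (refine phi z N M Hu GN (proj1 GM)).
rewrite (refine phi z M N Hu GM (proj1 GN)). rewrite Nat.mul_comm. auto.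
Qed.

Lemma good_weaken phi z N e e' : e <= e' -> good phi z N e -> good phi z N e'.
Proof. intros He [HN Hg]. split; auto. intros. pose proof (Hg a b H H0 H1). lra. Qed.

Lemma tele phi z0 z N : (forall z, unit (phi z)) -> good phi z0 N (1/8) -> good phi z N (3/8) ->
  (forall t, 0 <= t <= 1 -> cdist (phi (seg org z0 t)) (phi (seg org z t)) < 1/8) ->
  forall k, (k <= N)%nat ->
  sumk (term phi z N) k - sumk (term phi z0 N) k = rel (phi (pt z N k)) (phi (pt z0 N k)).
Proof.
intros Hu [HN G0] [_ G] Ht. induction k; intros Hk.
- simpl. rewrite !pt0 by auto. rewrite rel_self; auto. ring.
- simpl.
  replace (sumk (term phi z N) k + term phi z N k - (sumk (term phi z0 N) k + term phi z0 N k))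
    with ((sumk (term phi z N) k - sumk (term phi z0 N) k) + term phi z N k - term phi z0 N k) by ring.
  rewrite IHk by lia. unfold term.
  set (a0 := phi (pt z N k)). set (a1 := phi (pt z N (S k))).
  set (b0 := phi (pt z0 N k)). set (b1 := phi (pt z0 N (S k))).
  assert (Rk : 0 <= INR k / INR N <= 1) by (apply par_range; auto; lia).
  assert (RSk : 0 <= INR (S k) / INR N <= 1) by (apply par_range; auto; lia).
  assert (St : Rabs (INR (S k) / INR N - INR k / INR N) <= / INR N) by (apply par_step; auto).
  assert (Daa : cdist a1 a0 < 3/8) by (apply G; auto).
  assert (Dbb : cdist b1 b0 < 1/8) by (apply G0; auto).
  assert (Dab0 : cdist a0 b0 < 1/8) by (rewrite cdist_sym; apply Ht; auto).
  assert (Dab1 : cdist a1 b1 < 1/8) by (rewrite cdist_sym; apply Ht; auto).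
  assert (Dab : cdist a1 b0 < 1/4) by (pose proof (cdist_tri a1 b1 b0); lra).
  assert (E1 : rel a1 b0 = rel a1 a0 + rel a0 b0) by (apply rel_add; try apply Hu; lra).
  assert (E2 : rel a1 b0 = rel a1 b1 + rel b1 b0) by (apply rel_add; try apply Hu; lra).
  lra.
Qed.

Theorem lift_thm phi : (forall z, unit (phi z)) -> ctsC phi ->
  exists th : Cplx -> R, (forall z, fst (phi z) = cos (th z) /\ snd (phi z) = sin (th z)) /\
  (forall z e, 0 < e -> exists d, 0 < d /\ forall w, cdist z w < d -> Rabs (th w - th z) < e).
Proof.
intros Hu Hphi.
destruct (angle_exists (phi org) (Hu org)) as [th0 [C0 S0]].
assert (Gex : forall z, exists N, good phi z N (1/2)).
{ intros z. destruct (near_good phi z Hphi) as [rho [N [Hr [_ H]]]].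
  exists N. apply good_weaken with (3/8). lra. apply H. rewrite cdist_refl; auto. }
set (nN := fun z => proj1_sig (constructive_indefinite_description _ (Gex z))).
assert (HnN : forall z, good phi z (nN z) (1/2)).
{ intros z. unfold nN. destruct (constructive_indefinite_description _ (Gex z)); auto. }
exists (fun z => th0 + Ssum phi z (nN z)). split.
- intros z. destruct (HnN z) as [HN Hg].
  destruct (lift_pts phi z (nN z) th0 Hu (HnN z) C0 S0 (nN z) (le_n _)) as [A B].
  rewrite ptN in A, B by auto. auto.
- intros z0 e He.
  destruct (near_good phi z0 Hphi) as [rho [N [Hr [G0 H]]]].
  destruct (rel_small e He) as [eta [Heta Heta']].
  destruct (Hphi z0 eta Heta) as [d1 [Hd1 Hd1']].
  exists (Rmin rho d1). split. apply Rmin_pos; auto.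
  intros w Hw.
  assert (Hwr : cdist z0 w < rho) by (pose proof (Rmin_l rho d1); lra).
  assert (Hwd : cdist z0 w < d1) by (pose proof (Rmin_r rho d1); lra).
  destruct (H w Hwr) as [Gw Ht].
  rewrite (indep phi w (nN w) N Hu (HnN w) (good_weaken phi w N (3/8) (1/2) ltac:(lra) Gw)).
  rewrite (indep phi z0 (nN z0) N Hu (HnN z0) (good_weaken phi z0 N (1/8) (1/2) ltac:(lra) G0)).
  replace (th0 + Ssum phi w N - (th0 + Ssum phi z0 N)) with (Ssum phi w N - Ssum phi z0 N) by ring.
  unfold Ssum. rewrite (tele phi z0 w N Hu G0 Gw Ht N (le_n _)).
  rewrite !ptN by (apply (proj1 G0)).
  apply Heta'; auto. rewrite cdist_sym. auto.
Qed.

Definition isd (M : Cplx -> Prop) z r := (forall m, M m -> r <= cdist z m) /\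
  (forall e, 0 < e -> exists m, M m /\ cdist z m < r + e).

Lemma dist_ex M z : (exists m, M m) -> exists r, isd M z r.
Proof.
intros [m0 Hm0].
set (E := fun x => exists m, M m /\ x = - cdist z m).
assert (bE : bound E). { exists 0. intros x [m [_ ->]]. pose proof (cdist_nonneg z m). lra. }
destruct (completeness E bE (ex_intro _ (- cdist z m0) (ex_intro _ m0 (conj Hm0 eq_refl)))) as [l [Hub Hlub]].
exists (- l). split.
- intros m Hm. assert (E (- cdist z m)) by (exists m; auto). apply Hub in H. lra.
- intros e He. apply NNPP. intro Hn.
  assert (l <= l - e).
  { apply Hlub. intros x [m [Hm ->]].
    destruct (Rle_lt_dec (- cdist z m) (l - e)); auto. exfalso; apply Hn. exists m. split; auto. lra. }
  lra.
Qed.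

Lemma Rabs_le_inv a b : Rabs a <= b -> - b <= a <= b.
Proof. intros H. pose proof (Rle_abs a). pose proof (Rle_abs (-a)). rewrite Rabs_Ropp in H1. lra. Qed.

Lemma le_eps a b : (forall e, 0 < e -> a < b + e) -> a <= b.
Proof. intros H. destruct (Rle_lt_dec a b); auto. specialize (H ((a - b)/2)). lra. Qed.

Lemma isd_nonneg M z r : isd M z r -> 0 <= r.
Proof.
intros [_ H]. apply Ropp_le_cancel. rewrite Ropp_0. apply le_eps. intros e He.
destruct (H e He) as [m [_ Hm]]. pose proof (cdist_nonneg z m). lra.
Qed.

Lemma isd_lip M z w r s : isd M z r -> isd M w s -> r <= s + cdist z w.
Proof.
intros [H1 _] [_ H2]. apply le_eps. intros e He. destruct (H2 e He) as [m [Mm Hm]].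
pose proof (H1 m Mm). pose proof (cdist_tri z w m). lra.
Qed.

Lemma isd_zero M z : is_closed M -> isd M z 0 -> M z.
Proof.
intros HM [_ H]. apply NNPP. intro Hn. destruct (HM z Hn) as [r [Hr Hr']].
destruct (H r Hr) as [m [Mm Hm]]. apply (Hr' m); auto. lra.
Qed.

Lemma isd_in M z r : M z -> isd M z r -> r = 0.
Proof.
intros Mz Hd. pose proof (isd_nonneg _ _ _ Hd) as Hn. destruct Hd as [Hh _].
pose proof (Hh z Mz) as Hz. rewrite cdist_refl in Hz. lra.
Qed.

Lemma urysohn M1 M2 : is_closed M1 -> is_closed M2 -> (forall z, M1 z -> M2 z -> False) ->
  (exists z, M1 z) -> (exists z, M2 z) ->
  exists g : Cplx -> R, (forall z, M1 z -> g z = 0) /\ (forall z, M2 z -> g z = 1) /\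
  (forall z e, 0 < e -> exists d, 0 < d /\ forall w, cdist z w < d -> Rabs (g w - g z) < e).
Proof.
intros C1 C2 Hd N1 N2.
set (d1 := fun z => proj1_sig (constructive_indefinite_description _ (dist_ex M1 z N1))).
set (d2 := fun z => proj1_sig (constructive_indefinite_description _ (dist_ex M2 z N2))).
assert (H1 : forall z, isd M1 z (d1 z)).
{ intros z. unfold d1. destruct (constructive_indefinite_description _ _); auto. }
assert (H2 : forall z, isd M2 z (d2 z)).
{ intros z. unfold d2. destruct (constructive_indefinite_description _ _); auto. }
assert (P1 : forall z, 0 <= d1 z) by (intros; eapply isd_nonneg; eauto).
assert (P2 : forall z, 0 <= d2 z) by (intros; eapply isd_nonneg; eauto).
assert (L1 : forall z w, Rabs (d1 w - d1 z) <= cdist z w).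
{ intros z w. apply Rabs_le. pose proof (isd_lip _ _ _ _ _ (H1 z) (H1 w)).
  pose proof (isd_lip _ _ _ _ _ (H1 w) (H1 z)). rewrite cdist_sym in H0. lra. }
assert (L2 : forall z w, Rabs (d2 w - d2 z) <= cdist z w).
{ intros z w. apply Rabs_le. pose proof (isd_lip _ _ _ _ _ (H2 z) (H2 w)).
  pose proof (isd_lip _ _ _ _ _ (H2 w) (H2 z)). rewrite cdist_sym in H0. lra. }
assert (Dp : forall z, 0 < d1 z + d2 z).
{ intros z. destruct (Req_dec (d1 z + d2 z) 0) as [E|E].
  - exfalso. apply (Hd z). apply isd_zero; auto. specialize (P1 z); specialize (P2 z).
    replace 0 with (d1 z) by lra. auto.
    apply isd_zero; auto. specialize (P1 z); specialize (P2 z). replace 0 with (d2 z) by lra. auto.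
  - specialize (P1 z); specialize (P2 z). lra. }
exists (fun z => d1 z / (d1 z + d2 z)). split; [|split].
- intros z Mz. rewrite (isd_in _ _ _ Mz (H1 z)). unfold Rdiv; ring.
- intros z Mz. pose proof (Dp z). rewrite (isd_in _ _ _ Mz (H2 z)) in *. field. lra.
- intros z e He. set (D := d1 z + d2 z). assert (HD : 0 < D) by apply Dp.
  exists (Rmin (D/4) (e * D / 7)). split. apply Rmin_pos; try lra. apply Rdiv_lt_0_compat; nra.
  intros w Hw. pose proof (Rmin_l (D/4) (e * D / 7)). pose proof (Rmin_r (D/4) (e * D / 7)).
  set (dl := cdist z w) in *.
  pose proof (L1 z w) as A1. pose proof (L2 z w) as A2. fold dl in A1, A2.
  apply Rabs_le_inv in A1. apply Rabs_le_inv in A2.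
  set (Dw := d1 w + d2 w). assert (HDw : D / 2 <= Dw) by (unfold Dw, D in *; lra).
  assert (Ez : d1 w / Dw - d1 z / D = ((d1 w - d1 z) * D - d1 z * (Dw - D)) / (Dw * D)).
  { field. split; lra. }
  fold D Dw. rewrite Ez. unfold Rdiv. rewrite Rabs_mult.
  rewrite (Rabs_right (/ (Dw * D))) by (left; apply Rinv_0_lt_compat; nra).
  assert (Num : Rabs ((d1 w - d1 z) * D - d1 z * (Dw - D)) <= 3 * dl * D).
  { pose proof (P1 z). assert (d1 z <= D) by (unfold D; pose proof (P2 z); lra).
    apply Rabs_le. unfold Dw, D in *. split; nra. }
  assert (Inv : / (Dw * D) <= 2 / (D * D)).
  { replace (2 / (D * D)) with (/ ((D/2) * D)) by (field; lra).
    apply Rinv_le_contravar. nra. nra. }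
  assert (0 <= dl) by apply cdist_nonneg.
  apply Rle_lt_trans with (3 * dl * D * (2 / (D * D))).
  apply Rmult_le_compat; auto. apply Rabs_pos. left; apply Rinv_0_lt_compat; nra.
  replace (3 * dl * D * (2 / (D * D))) with (6 * dl / D) by (field; lra).
  apply Rmult_lt_reg_r with D; auto. unfold Rdiv. rewrite Rmult_assoc, Rinv_l by lra.
  assert (Hdl : dl < e * D / 7) by lra.
  apply Rmult_lt_compat_r with (r := 7) in Hdl; [|lra]. unfold Rdiv in Hdl.
  rewrite Rmult_assoc, Rinv_l in Hdl by lra. lra.
Qed.

Definition cts (f : Cplx -> R) := forall z e, 0 < e -> exists d, 0 < d /\
  forall w, cdist z w < d -> Rabs (f w - f z) < e.

Lemma cts_comb f g a c : cts f -> cts g -> cts (fun z => f z + a * g z + c).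
Proof.
intros Hf Hg z e He.
destruct (Hf z (e/2)) as [d1 [Hd1 H1]]. lra.
assert (Ha : 0 < Rabs a + 1) by (pose proof (Rabs_pos a); lra).
destruct (Hg z (e / (2 * (Rabs a + 1)))) as [d2 [Hd2 H2]]. apply Rdiv_lt_0_compat; lra.
exists (Rmin d1 d2). split. apply Rmin_pos; auto. intros w Hw.
pose proof (Rmin_l d1 d2). pose proof (Rmin_r d1 d2).
specialize (H1 w ltac:(lra)). specialize (H2 w ltac:(lra)).
replace (f w + a * g w + c - (f z + a * g z + c)) with ((f w - f z) + a * (g w - g z)) by ring.
eapply Rle_lt_trans. apply Rabs_triang. rewrite Rabs_mult.
assert (Rabs a * Rabs (g w - g z) <= (Rabs a + 1) * (e / (2 * (Rabs a + 1)))).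
{ apply Rmult_le_compat. apply Rabs_pos. apply Rabs_pos. lra. lra. }
replace ((Rabs a + 1) * (e / (2 * (Rabs a + 1)))) with (e/2) in H3 by (field; lra). lra.
Qed.

Lemma cts_clos h (S : Cplx -> Prop) c : cts h -> (forall z, S z -> h z = c) ->
  forall z, clos S z -> h z = c.
Proof.
intros Hh HS z Hz. apply NNPP. intro Hn.
assert (He : 0 < Rabs (h z - c)) by (apply Rabs_pos_lt; lra).
destruct (Hh z _ He) as [d [Hd Hd']]. destruct (Hz d Hd) as [w [Sw Hw]].
specialize (Hd' w Hw). rewrite HS in Hd' by auto. rewrite Rabs_minus_sym in Hd'. lra.
Qed.

Lemma sin0_cases x : sin x = 0 -> x = 0 \/ 3 < Rabs x.
Proof.
intros H. destruct (sin_eq_0_0 x H) as [k ->]. pose proof PI2_3_2.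
destruct (Z.eq_dec k 0) as [->|Hk]. left; simpl; ring.
right. rewrite Rabs_mult, (Rabs_right PI) by lra.
assert (1 <= Rabs (IZR k)).
{ destruct (Z_le_gt_dec k 0).
  - assert (k <= -1)%Z by lia. apply IZR_le in H1. rewrite Rabs_left1 by lra. simpl in H1. lra.
  - assert (1 <= k)%Z by lia. apply IZR_le in H1. rewrite Rabs_right by lra. lra. }
nra.
Qed.

Lemma lift_unique (K : Cplx -> Prop) h : connected K -> cts h ->
  (forall z, K z -> sin (h z) = 0) -> forall z0, K z0 -> h z0 = 0 -> forall z, K z -> h z = 0.
Proof.
intros HK Hh Hs z0 Kz0 H0 z Kz.
destruct (sin0_cases _ (Hs z Kz)) as [E|E]; auto. exfalso. apply HK.
exists (fun w => Rabs (h w) < 1), (fun w => 1 < Rabs (h w)).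
split.
{ intros w Hw. destruct (Hh w (1 - Rabs (h w))) as [d [Hd Hd']]. lra.
  exists d. split; auto. intros u Hu. specialize (Hd' u Hu).
  pose proof (Rabs_triang (h u - h w) (h w)).
  replace (h u - h w + h w) with (h u) in H by ring. lra. }
split.
{ intros w Hw. destruct (Hh w (Rabs (h w) - 1)) as [d [Hd Hd']]. lra.
  exists d. split; auto. intros u Hu. specialize (Hd' u Hu).
  pose proof (Rabs_triang (h w - h u) (h u)).
  replace (h w - h u + h u) with (h w) in H by ring. rewrite Rabs_minus_sym in Hd'. lra. }
split.
{ intros w Kw. destruct (sin0_cases _ (Hs w Kw)) as [E'|E']. left. rewrite E', Rabs_R0. lra. right; lra. }
split. exists z0. split; auto. rewrite H0, Rabs_R0. lra.
split. exists z. split; auto. lra.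
intros w _ H1 H2. lra.
Qed.

Lemma cont_R f a : continuity_pt f a -> forall e, 0 < e -> exists d, 0 < d /\
  forall b, Rabs (b - a) < d -> Rabs (f b - f a) < e.
Proof.
intros Hf e He. destruct (Hf e He) as [d [Hd Hd']]. exists d. split; auto.
intros b Hb. destruct (Req_dec b a) as [->|Hne].
- unfold Rminus; rewrite Rplus_opp_r, Rabs_R0; auto.
- apply (Hd' b). split. split. exact I. auto. exact Hb.
Qed.

Lemma e_cont a e : 0 < e -> exists d, 0 < d /\ forall b, Rabs (b - a) < d ->
  cdist (cos a, sin a) (cos b, sin b) < e.
Proof.
intros He.
destruct (cont_R cos a (continuity_cos a) (e/2)) as [d1 [Hd1 H1]]. lra.
destruct (cont_R sin a (continuity_sin a) (e/2)) as [d2 [Hd2 H2]]. lra.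
exists (Rmin d1 d2). split. apply Rmin_pos; auto. intros b Hb.
pose proof (Rmin_l d1 d2). pose proof (Rmin_r d1 d2).
specialize (H1 b ltac:(lra)). specialize (H2 b ltac:(lra)).
apply cdist_lt; auto. unfold sq_d; cbn [fst snd].
rewrite <- (pow2_abs (cos a - cos b)), <- (pow2_abs (sin a - sin b)).
rewrite Rabs_minus_sym, (Rabs_minus_sym (sin a)).
pose proof (Rabs_pos (cos b - cos a)). pose proof (Rabs_pos (sin b - sin a)). nra.
Qed.

Lemma forward C : ~ connected C -> exists A, is_closed A /\ connected A /\ disconnects A C.
Proof.
intros HC.
destruct (NNPP _ HC) as [U [V [HU [HV [Hc [[p [Cp Up]] [[q [Cq Vq]] Hd]]]]]]].
set (G1 := fun x => exists z r, C z /\ U z /\ 0 < r /\ (forall y, cdist z y < r -> U y) /\ cdist z x < r/3).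
assert (G1o : is_open G1).
{ intros x [z [r [Cz [Uz [Hr [Hr' Hx]]]]]]. exists (r/3 - cdist z x). split. lra.
  intros w Hw. exists z, r. do 4 (split; auto). pose proof (cdist_tri z x w). lra. }
assert (UG : forall z, C z -> U z -> G1 z).
{ intros z Cz Uz. destruct (HU z Uz) as [r [Hr Hr']]. exists z, r. do 4 (split; auto).
  rewrite cdist_refl. lra. }
assert (key : forall w, C w -> V w -> ~ clos G1 w).
{ intros w Cw Vw Hcl. destruct (HV w Vw) as [s [Hs Hs']].
  destruct (Hcl (s/3)) as [x [[z [r [Cz [Uz [Hr [Hr' Hx]]]]]] Hwx]]. lra.
  pose proof (cdist_tri z x w) as T. rewrite (cdist_sym x w) in T.
  destruct (Rle_lt_dec s r).
  - apply (Hd w Cw); auto. apply Hr'. lra.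
  - apply (Hd z Cz Uz). apply Hs'. rewrite cdist_sym. lra. }
set (P := component G1 p).
assert (Pp : P p) by (apply comp_self; apply UG; auto).
assert (Po : is_open P) by (apply comp_open; auto).
assert (clos_mono : forall (S T : Cplx -> Prop), (forall z, S z -> T z) -> forall z, clos S z -> clos T z).
{ intros S T HST z Hz e He. destruct (Hz e He) as [w [Sw Hw]]. exists w; auto. }
set (Y := fun z => ~ clos P z).
assert (Yq : Y q). { intro Hq. apply (key q Cq Vq). eapply clos_mono; [|exact Hq].
  intros; eapply comp_sub; eauto. }
set (W := component Y q).
assert (Wq : W q) by (apply comp_self; auto).
assert (Wo : is_open W) by (apply comp_open; apply not_clos_open).
assert (WY : forall z, W z -> Y z) by (intros; eapply comp_sub; eauto).
assert (PW : forall z, P z -> clos W z -> False).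
{ apply (open_clos_disj P W Po). intros z Pz Wz. apply (WY z Wz). apply clos_incl; auto. }
set (A := fun z => clos W z /\ ~ W z).
assert (AP : forall z, A z -> clos P z).
{ intros z [Hz Hn]. apply NNPP. intro Yz.
  destruct (not_clos_open P z Yz) as [r [Hr Hr']].
  destruct (Hz r Hr) as [w [Ww Hw]].
  apply Hn. apply (comp_absorb Y q (ball z r)). apply ball_connected.
  intros u Hu; apply Hr'; auto. exists w. split; auto.
  unfold ball; rewrite cdist_refl; auto. }
assert (AG : forall z, A z -> ~ G1 z).
{ intros z Az Gz. destruct (G1o z Gz) as [r [Hr Hr']].
  destruct (AP z Az r Hr) as [w [Pw Hw]].
  assert (Pz : P z).
  { apply (comp_absorb G1 p (ball z r)). apply ball_connected. intros; apply Hr'; auto.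
    exists w; split; auto. unfold ball; rewrite cdist_refl; auto. }
  apply (PW z Pz (proj1 Az)). }
assert (AC : forall z, A z -> C z -> False).
{ intros z Az Cz. destruct (Hc z Cz) as [Uz|Vz].
  apply (AG z Az). apply UG; auto.
  apply (key z Cz Vz). eapply clos_mono; [|apply AP; auto]. intros; eapply comp_sub; eauto. }
assert (Aclosed : is_closed A).
{ intros z Hz. destruct (classic (W z)) as [Wz|Wz].
  - destruct (Wo z Wz) as [r [Hr Hr']]. exists r. split; auto. intros w Hw [_ Hn]. apply Hn; auto.
  - assert (Hcz : ~ clos W z) by (intro; apply Hz; split; auto).
    destruct (not_clos_open W z Hcz) as [r [Hr Hr']]. exists r; split; auto.
    intros w Hw [Hcw _]. apply (Hr' w Hw Hcw). }
exists A. split; auto. split.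
2:{
split. intros z Cz Az; eapply AC; eauto.
exists (component (fun z => ~ A z) p), (component (fun z => ~ A z) q).
assert (nAp : ~ A p) by (intro; eapply AC; eauto).
assert (nAq : ~ A q) by (intro; eapply AC; eauto).
split. exists p. split; auto. intros; tauto.
split. exists q. split; auto. intros; tauto.
split.
{ intro Heq. assert (Hpq : component (fun z => ~ A z) p q) by (apply Heq; apply comp_self; auto).
  destruct Hpq as [K [KA [HK [Kp Kq]]]]. apply HK. exists W, (fun z => ~ clos W z).
  split; auto. split. apply not_clos_open. split.
  { intros z Kz. destruct (classic (W z)); auto. right. intro Hcl. apply (KA z Kz). split; auto. }
  split. exists q; auto. split. exists p. split; auto. intro Hcl; apply (PW p Pp Hcl).
  intros z _ Wz Hn. apply Hn; apply clos_incl; auto. }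
split. exists p. split; auto. apply comp_self; auto.
exists q. split; auto. apply comp_self; auto. }
intros [U' [V' [HU' [HV' [Hc' [[a1 [Aa1 Ua1]] [[a2 [Aa2 Va2]] Hd']]]]]]].
set (M1 := fun z => A z /\ U' z). set (M2 := fun z => A z /\ V' z).
assert (M1c : is_closed M1).
{ intros z Hz. destruct (classic (A z)) as [Az|Az].
  - assert (Vz : V' z) by (destruct (Hc' z Az); auto; exfalso; apply Hz; split; auto).
    destruct (HV' z Vz) as [r [Hr Hr']]. exists r; split; auto.
    intros w Hw [Aw Uw]. apply (Hd' w Aw Uw (Hr' w Hw)).
  - destruct (Aclosed z Az) as [r [Hr Hr']]. exists r; split; auto.
    intros w Hw [Aw _]. apply (Hr' w Hw Aw). }
assert (M2c : is_closed M2).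
{ intros z Hz. destruct (classic (A z)) as [Az|Az].
  - assert (Uz : U' z) by (destruct (Hc' z Az); auto; exfalso; apply Hz; split; auto).
    destruct (HU' z Uz) as [r [Hr Hr']]. exists r; split; auto.
    intros w Hw [Aw Vw]. apply (Hd' w Aw (Hr' w Hw) Vw).
  - destruct (Aclosed z Az) as [r [Hr Hr']]. exists r; split; auto.
    intros w Hw [Aw _]. apply (Hr' w Hw Aw). }
destruct (urysohn M1 M2 M1c M2c) as [g [g1 [g2 gc]]].
{ intros z [Az Uz] [_ Vz]. eapply Hd'; eauto. }
{ exists a1. split; auto. }
{ exists a2. split; auto. }
set (phi := fun z => if excluded_middle_informative (clos W z)
   then (cos (2*PI*g z), sin (2*PI*g z)) else (1,0)).
assert (gA : forall z, A z -> cos (2*PI*g z) = 1 /\ sin (2*PI*g z) = 0).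
{ intros z Az. destruct (Hc' z Az) as [Uz|Vz].
  - rewrite g1 by (split; auto). rewrite Rmult_0_r, cos_0, sin_0; auto.
  - rewrite g2 by (split; auto). rewrite Rmult_1_r. rewrite cos_2PI, sin_2PI; auto. }
assert (phiu : forall z, unit (phi z)).
{ intros z. unfold phi, unit. destruct (excluded_middle_informative _); cbn [fst snd].
  pose proof (sin2_cos2 (2*PI*g z)). unfold Rsqr in H. lra. ring. }
assert (phiW : forall z, clos W z -> phi z = (cos (2*PI*g z), sin (2*PI*g z))).
{ intros z Hz. unfold phi. destruct (excluded_middle_informative _); auto. contradiction. }
assert (phic : ctsC phi).
{ intros z e He.
  destruct (classic (clos W z)) as [Hz|Hz].
  - destruct (e_cont (2*PI*g z) e He) as [d1 [Hd1 Hd1']].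
    pose proof PI_RGT_0.
    destruct (gc z (d1/(2*PI))) as [d2 [Hd2 Hd2']]. apply Rdiv_lt_0_compat; lra.
    assert (Hclose : forall w, cdist z w < d2 ->
       cdist (cos (2*PI*g z), sin (2*PI*g z)) (cos (2*PI*g w), sin (2*PI*g w)) < e).
    { intros w Hw. apply Hd1'. specialize (Hd2' w Hw).
      replace (2*PI*g w - 2*PI*g z) with (2*PI*(g w - g z)) by ring.
      rewrite Rabs_mult, (Rabs_right (2*PI)) by lra.
      apply Rmult_lt_compat_l with (r := 2*PI) in Hd2'; [|lra].
      replace (2 * PI * (d1 / (2 * PI))) with d1 in Hd2' by (field; lra). lra. }
    destruct (classic (W z)) as [Wz|Wz].
    + destruct (Wo z Wz) as [r [Hr Hr']]. exists (Rmin d2 r). split. apply Rmin_pos; auto.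
      intros w Hw. pose proof (Rmin_l d2 r). pose proof (Rmin_r d2 r).
      rewrite (phiW z Hz), (phiW w). apply Hclose; lra. apply clos_incl. apply Hr'; lra.
    + exists d2. split; auto. intros w Hw. rewrite (phiW z Hz).
      destruct (classic (clos W w)) as [Hw'|Hw'].
      * rewrite (phiW w Hw'). apply Hclose; auto.
      * unfold phi. destruct (excluded_middle_informative (clos W w)); [contradiction|].
        destruct (gA z (conj Hz Wz)) as [-> ->]. rewrite cdist_refl; auto.
  - destruct (not_clos_open W z Hz) as [r [Hr Hr']]. exists r. split; auto. intros w Hw.
    unfold phi. destruct (excluded_middle_informative (clos W z)); [contradiction|].
    destruct (excluded_middle_informative (clos W w)).
    + exfalso; apply (Hr' w Hw); auto.
    + rewrite cdist_refl; auto. }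
destruct (lift_thm phi phiu phic) as [th [thl thc]].
assert (phiP : forall z, P z -> phi z = (1,0)).
{ intros z Pz. unfold phi. destruct (excluded_middle_informative _); auto. exfalso; eapply PW; eauto. }
set (h1 := fun z => th z + 0 * g z + (- th p)).
assert (h1c : cts h1) by (apply cts_comb; auto).
assert (h1z : forall z, P z -> h1 z = 0).
{ intros z0 Pz0. refine (lift_unique P h1 (comp_connected G1 p) h1c _ p Pp _ z0 Pz0).
  - intros z Pz. unfold h1. destruct (thl z) as [c1 s1]; destruct (thl p) as [c2 s2].
    rewrite phiP in c1, s1 by auto. rewrite phiP in c2, s2 by auto. cbn [fst snd] in *.
    replace (th z + 0 * g z + - th p) with (th z - th p) by ring.
    rewrite sin_minus. rewrite <- c1, <- s1, <- c2, <- s2. ring.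
  - unfold h1; ring. }
assert (h1A : forall z, A z -> h1 z = 0).
{ intros z Az. apply (cts_clos h1 P 0 h1c h1z). apply AP; auto. }
set (h2 := fun z => th z + (-(2*PI)) * g z + (2*PI*g q - th q)).
assert (h2c : cts h2) by (apply cts_comb; auto).
assert (h2z : forall z, W z -> h2 z = 0).
{ intros z0 Wz0. refine (lift_unique W h2 (comp_connected Y q) h2c _ q Wq _ z0 Wz0).
  - intros z Wz. unfold h2.
    destruct (thl z) as [c1 s1]; destruct (thl q) as [c2 s2].
    rewrite phiW in c1, s1 by (apply clos_incl; auto).
    rewrite phiW in c2, s2 by (apply clos_incl; auto). cbn [fst snd] in *.
    replace (th z + - (2 * PI) * g z + (2 * PI * g q - th q)) with
      ((th z - 2*PI*g z) - (th q - 2*PI*g q)) by ring.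
    rewrite sin_minus, !sin_minus, !cos_minus. rewrite <- c1, <- s1, <- c2, <- s2. ring.
  - unfold h2; ring. }
assert (h2A : forall z, A z -> h2 z = 0).
{ intros z Az. apply (cts_clos h2 W 0 h2c h2z). apply (proj1 Az). }
pose proof (h1A a1 Aa1) as E1. pose proof (h1A a2 Aa2) as E2.
pose proof (h2A a1 Aa1) as E3. pose proof (h2A a2 Aa2) as E4.
unfold h1, h2 in *. rewrite (g1 a1) in E1, E3 by (split; auto).
rewrite (g2 a2) in E2, E4 by (split; auto). pose proof PI_RGT_0. lra.
Qed.

Theorem lemma3p1 (C : Cplx -> Prop) :
  ~ connected C <->
  exists A : Cplx -> Prop, is_closed A /\ connected A /\ disconnects A C.
Proof.
split.
- apply forward.
- intros [A [HA [_ HD]]]. exact (backward C A HA HD).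
Qed.
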